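(* Let $\mathbb{U}_{n,G}$ be the class of all unitary $n$-qubit channels of gate complexity at most $G$, and let $\varepsilon<1/2$. Any online learner for $\mathbb{U}_{n,G}$ makes $\Omega(\min\{2^n,\sqrt{G}\})$ many $\varepsilon$-mistakes against a worst-case adversary. This remains true even if the adversary is forced to decide on a channel in $\mathbb{U}_{n,G}$ before the interaction with the learner.
   Context: A unitary $n$-qubit channel $\rho\mapsto U\rho U^\dagger$ has gate complexity at most $G$ if it can be written as a composition of at most $G$ two-qubit gate channels, each acting on some pair of the $n$ qubits (identity elsewhere). Online learning a class $\mathsf{C}$: in each round the adversary presents a channel test operator $E_{A,B}$ ($E_{A,B}\geq0$ on two $n$-qubit systems with $E_{A,B}\leq\sigma_A\otimes\mathbb{1}_B$ for some density operator $\sigma_A$), the learner predicts a value in $[0,1]$ based on past information, and the adversary reveals the true value $\mathrm{Tr}[E_{A,B}C^{\mathcal{N}}_{A,B}]$ for the target $\mathcal{N}\in\mathsf{C}$, with $C^{\mathcal{N}}_{A,B}=\sum_{i,j}|i\rangle\langle j|\otimes\mathcal{N}(|i\rangle\langle j|)$. An $\varepsilon$-mistake is a round where the prediction differs from the true value by more than $\varepsilon$. *)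

(* Defs.v *)
From HB Require Import structures.
From mathcomp Require Import all_boot all_order all_algebra.
From mathcomp Require Import reals.
From mathcomp Require Import complex.
From mathcomp Require mxtens.
From Stdlib Require List.

Unset Implicit Arguments.
Unset Strict Implicit.
Unset Printing Implicit Defensive.

Import Order.TTheory GRing.Theory Num.Theory.
Local Open Scope ring_scope.

Section Quantum.
Variable R : realType.
Local Notation C := (R[i]).

Definition adj {m p} (M : 'M[C]_(m, p)) : 'M[C]_(p, m) := (map_mx Num.conj M)^T.

Definition psdmx {d} (M : 'M[C]_d) : Prop :=
  adj M = M /\ forall v : 'cV[C]_d, 0 <= (adj v *m M *m v) 0 0.

Definition density {d} (s : 'M[C]_d) : Prop := psdmx s /\ \tr s = 1.

Definition unitary {d} (U : 'M[C]_d) : Prop := U *m adj U = 1%:M.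

Definition qdim (n : nat) : nat := 2 ^ n.

Definition qbit (k x : nat) : nat := odd (x %/ 2 ^ k).

Definition loc2 (i j x : nat) : 'I_4 := inord (2 * qbit i x + qbit j x).

Definition embed_gate (n i j : nat) (V : 'M[C]_4) : 'M[C]_(qdim n) :=
  \matrix_(x, y)
    (if [forall k : 'I_n, ((k != i :> nat) && (k != j :> nat)) ==>
                          (qbit k x == qbit k y)]
     then V (loc2 i j x) (loc2 i j y) else 0).

Record gate (n : nat) := Gate { gq1 : 'I_n; gq2 : 'I_n; gmat : 'M[C]_4 }.
Arguments gq1 {n}.
Arguments gq2 {n}.
Arguments gmat {n}.

Definition gate_ok {n} (g : gate n) : Prop :=
  gq1 g != gq2 g /\ unitary (gmat g).

Definition gate_unitary {n} (g : gate n) : 'M[C]_(qdim n) :=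
  embed_gate n (gq1 g) (gq2 g) (gmat g).

Definition gate_complexity_le (n G : nat) (U : 'M[C]_(qdim n)) : Prop :=
  exists gs : seq (gate n),
    [/\ (size gs <= G)%N, (forall g, List.In g gs -> gate_ok g) &
        U = foldr (fun g M => gate_unitary g *m M) 1%:M gs].

(* the class U_{n,G} of unitary channels rho |-> U rho U^dagger,
   represented by their unitaries *)
Definition unitary_class (n G : nat) (U : 'M[C]_(qdim n)) : Prop :=
  unitary U /\ gate_complexity_le n G U.

Definition uchannel {d} (U : 'M[C]_d) (rho : 'M[C]_d) : 'M[C]_d :=
  U *m rho *m adj U.

Definition choi {d} (N : 'M[C]_d -> 'M[C]_d) : 'M[C]_(d * d) :=
  \sum_(i < d) \sum_(j < d)
     mxtens.tensmx (delta_mx i j : 'M[C]_d) (N (delta_mx i j)).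

Definition test_op {d} (E : 'M[C]_(d * d)) : Prop :=
  psdmx E /\ exists sigma : 'M[C]_d,
    density sigma /\ psdmx (mxtens.tensmx sigma (1%:M : 'M[C]_d) - E).

Definition test_value {d} (E : 'M[C]_(d * d)) (N : 'M[C]_d -> 'M[C]_d) : C :=
  \tr (E *m choi N).

(* a (deterministic) online learner: from the past information (the test
   operators presented so far together with their revealed true values)
   and the current test operator, it predicts a value *)
Definition learner (d : nat) :=
  seq ('M[C]_(d * d) * C) -> 'M[C]_(d * d) -> R.

Fixpoint mistakes {d} (L : learner d) (N : 'M[C]_d -> 'M[C]_d) (eps : R)
    (hist : seq ('M[C]_(d * d) * C)) (Es : seq 'M[C]_(d * d)) : nat :=
  match Es with
  | [::] => 0%N
  | E :: Es' =>
      let v := test_value E N in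
      (((eps%:C)%C < `|((L hist E)%:C)%C - v|)%R +
       mistakes L N eps (rcons hist (E, v)) Es')%N
  end.

End Quantum.

(* Main.v *)
Require Import Defs.
From HB Require Import structures.
From mathcomp Require Import all_boot all_order all_algebra.
From mathcomp Require Import reals complex.
From mathcomp Require mxtens.
From mathcomp Require Import zify ring lra.
From Stdlib Require List.
Import Order.TTheory GRing.Theory Num.Theory.
Local Open Scope ring_scope.
Section Bits.
Local Open Scope nat_scope.
Definition qb (k x : nat) : bool := odd (x %/ 2 ^ k).

Lemma qbitE k x : qbit k x = qb k x. Proof. by []. Qed.

Lemma qb0 x : qb 0 x = odd x.
Proof. by rewrite /qb expn0 divn1. Qed.

Lemma qbS k x : qb k.+1 x = qb k (x %/ 2).
Proof. by rewrite /qb expnS divnMA. Qed.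

Lemma qb_small k x : (x < 2 ^ k)%N -> qb k x = false.
Proof. by move=> h; rewrite /qb divn_small. Qed.

Lemma bits_eq n x y : (x < 2 ^ n)%N -> (y < 2 ^ n)%N ->
  (forall k, (k < n)%N -> qb k x = qb k y) -> x = y.
Proof.
elim: n x y => [|n IH] x y.
  by rewrite expn0 !ltnS !leqn0 => /eqP -> /eqP ->.
move=> hx hy hb.
have h0 := hb 0%N (ltn0Sn n); rewrite !qb0 in h0.
have e : x %/ 2 = y %/ 2.
  apply: IH.
  - by rewrite ltn_divLR // -expnSr.
  - by rewrite ltn_divLR // -expnSr.
  by move=> k hk; rewrite -!qbS; apply: hb.
by rewrite (div.divn_eq x 2) (div.divn_eq y 2) e !modn2 h0.
Qed.

Definition num (n : nat) (beta : nat -> bool) : nat :=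
  \sum_(k < n) beta k * 2 ^ k.

Lemma numS n beta : num n.+1 beta = beta 0%N + num n (fun k => beta k.+1) * 2.
Proof.
rewrite /num big_ord_recl /= expn0 muln1; congr (_ + _)%N.
rewrite big_distrl /=; apply: eq_bigr => i _.
by rewrite expnS; case: (beta i.+1) => /=; lia.
Qed.

Lemma num_lt n beta : (num n beta < 2 ^ n)%N.
Proof.
elim: n beta => [|n IH] beta; first by rewrite /num big_ord0.
rewrite numS expnS.
have := IH (fun k => beta k.+1); case: (beta 0%N) => /=; lia.
Qed.

Lemma qb_num n beta k : (k < n)%N -> qb k (num n beta) = beta k.
Proof.
elim: n beta k => [|n IH] beta k //.
rewrite numS; case: k => [|k] hk.
  by rewrite qb0 oddD oddM /= andbF addbF; case: (beta 0%N).
rewrite qbS divnDMl // divn_small ?add0n; last by case: (beta 0%N).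
by apply: IH.
Qed.
End Bits.
Section Mono.
Variable R : realType.
Local Notation C := (R[i]).

Definition mono {d} (psi : 'I_d -> 'I_d) (phi : 'I_d -> C) : 'M[C]_d :=
  \matrix_(x, y) ((x == psi y)%:R * phi y).

Lemma mono_mul d (p1 p2 : 'I_d -> 'I_d) (f1 f2 : 'I_d -> C) :
  mono p1 f1 *m mono p2 f2 = mono (p1 \o p2) (fun y => f1 (p2 y) * f2 y).
Proof.
apply/matrixP => x y; rewrite !mxE (bigD1 (p2 y)) //= big1 => [|k /negbTE hk].
  by rewrite !mxE eqxx mul1r addr0 mulrA.
by rewrite !mxE hk mul0r mulr0.
Qed.

Lemma mono1 d : (1%:M : 'M[C]_d) = mono id (fun _ => 1).
Proof. by apply/matrixP => x y; rewrite !mxE mulr1. Qed.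

Lemma mono_ext d (p1 p2 : 'I_d -> 'I_d) (f1 f2 : 'I_d -> C) :
  (forall y, p1 y = p2 y) -> (forall y, f1 y = f2 y) -> mono p1 f1 = mono p2 f2.
Proof. by move=> hp hf; apply/matrixP => x y; rewrite !mxE hp hf. Qed.

Definition hi4 (p : 'I_4) : bool := (2 <= p)%N.
Definition lo4 (p : 'I_4) : bool := odd p.

Lemma loc2_val i j x : (loc2 i j x : nat) = (2 * qb i x + qb j x)%N.
Proof. rewrite /loc2 inordK // !qbitE; by case: (qb i x); case: (qb j x). Qed.

Lemma loc2_eq i j x (p : 'I_4) :
  (loc2 i j x == p) = (qb i x == hi4 p) && (qb j x == lo4 p).
Proof.
rewrite -[_ == _]/(nat_of_ord (loc2 i j x) == nat_of_ord p) loc2_val /hi4 /lo4.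
case: p => [[|[|[|[|p]]]] hp] //=; by case: (qb i x); case: (qb j x).
Qed.

Definition newbits (i j : nat) (p : 'I_4) (y : nat) (k : nat) : bool :=
  if k == i then hi4 p else if k == j then lo4 p else qb k y.

Definition Pi n (i j : nat) (pi : 'I_4 -> 'I_4) (y : 'I_(qdim n)) : 'I_(qdim n) :=
  Ordinal (num_lt n (newbits i j (pi (loc2 i j y)) y)).

Lemma qb_Pi n i j pi y k : (k < n)%N ->
  qb k (Pi n i j pi y) = newbits i j (pi (loc2 i j y)) y k.
Proof. by move=> hk; rewrite /Pi /= qb_num. Qed.

Lemma eq_ord_bits n (x y : 'I_(qdim n)) :
  (x == y) = [forall k : 'I_n, qb k x == qb k y].
Proof.
apply/eqP/forallP => [-> //|h]; apply: val_inj; apply: (@bits_eq n); rewrite ?ltn_ord //.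
by move=> k hk; apply/eqP; apply: (h (Ordinal hk)).
Qed.

Lemma embed_mono n (i j : 'I_n) (pi : 'I_4 -> 'I_4) (c : 'I_4 -> C) :
  (i != j :> nat) ->
  embed_gate R n i j (mono pi c) = mono (Pi n i j pi) (fun y => c (loc2 i j y)).
Proof.
move=> hij; apply/matrixP => x y; rewrite !mxE.
set p := pi (loc2 i j y).
have -> : (x == Pi n i j pi y) =
   [forall k : 'I_n, ((k != i :> nat) && (k != j :> nat)) ==> (qbit k x == qbit k y)]
   && (loc2 i j x == p).
  rewrite eq_ord_bits loc2_eq; apply/forallP/andP => [h|[/forallP h1 /andP[h2 h3]]].
    split.
      apply/forallP => k; apply/implyP => /andP[hki hkj].
      have := h k; rewrite qb_Pi // /newbits (negbTE hki) (negbTE hkj) qbitE.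
      by move/eqP ->.
    have := h i; rewrite qb_Pi // /newbits eqxx => ->.
    have hji : (j == i :> nat) = false by rewrite eq_sym; apply/negbTE.
    by have := h j; rewrite qb_Pi // /newbits eqxx hji => ->.
  move=> k; rewrite qb_Pi // /newbits.
  have [e|hki] := eqVneq (k : nat) (i : nat); first by rewrite e; exact h2.
  have [e|hkj] := eqVneq (k : nat) (j : nat); first by rewrite e ?eqxx //; exact h3.
  rewrite ?(negbTE hki) ?(negbTE hkj).
  have := h1 k; rewrite !qbitE hki hkj.
  by move/implyP => /(_ isT) /eqP; case: (qb k x); case: (qb k y).
by case: ifP => _ //=; rewrite mul0r.
Qed.

End Mono.
Section Circ.
Variable R : realType.
Local Notation C := (R[i]).
Variable n' : nat.
Local Notation n := n'.+1.

Lemma hi4_loc2 i j x : hi4 (loc2 i j x) = qb i x.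
Proof. by rewrite /hi4 loc2_val; case: (qb i x); case: (qb j x). Qed.
Lemma lo4_loc2 i j x : lo4 (loc2 i j x) = qb j x.
Proof. by rewrite /lo4 loc2_val; case: (qb i x); case: (qb j x). Qed.

Definition cnot4 (p : 'I_4) : 'I_4 :=
  if hi4 p then inord (if lo4 p then 2 else 3) else p.

Lemma hi4_cnot4 p : hi4 (cnot4 p) = hi4 p.
Proof. by case: p => [[|[|[|[|p]]]] hp] //=; rewrite /cnot4 /hi4 /lo4 /= inordK. Qed.
Lemma lo4_cnot4 p : lo4 (cnot4 p) = lo4 p (+) hi4 p.
Proof. by case: p => [[|[|[|[|p]]]] hp] //=; rewrite /cnot4 /hi4 /lo4 /= inordK. Qed.
Lemma cnot4K p : cnot4 (cnot4 p) = p.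
Proof.
by apply: val_inj; case: p => [[|[|[|[|p]]]] hp] //=; rewrite /cnot4 /hi4 /lo4 /= ?inordK.
Qed.

Definition CNOT : 'M[C]_4 := mono R cnot4 (fun _ => 1).
Definition PH (w : C) : 'M[C]_4 := mono R id (fun p => if hi4 p then w else 1).

Definition gate_cnot (s t : nat) : gate R n := Gate R n (inord s) (inord t) CNOT.
Definition gate_ph (t u : nat) (w : C) : gate R n := Gate R n (inord t) (inord u) (PH w).

Definition sem (gs : seq (gate R n)) : 'M[C]_(qdim n) :=
  foldr (fun g M => gate_unitary R g *m M) 1%:M gs.

Lemma sem_cat gs1 gs2 : sem (gs1 ++ gs2) = sem gs1 *m sem gs2.
Proof.
rewrite /sem foldr_cat.
elim: gs1 => [|g gs IH] /=; first by rewrite mul1mx.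
by rewrite IH mulmxA.
Qed.

Definition PiC (s t : nat) := Pi n (@inord n' s) (@inord n' t) cnot4.

Lemma qb_PiC s t y k : (s < n)%N -> (t < n)%N -> s != t -> (k < n)%N ->
  qb k (PiC s t y) = if k == t then qb t y (+) qb s y else qb k y.
Proof.
move=> hs ht hst hk; rewrite /PiC qb_Pi // /newbits !inordK //.
rewrite hi4_cnot4 lo4_cnot4 hi4_loc2 lo4_loc2.
case: (eqVneq k s) => [?|hks]; first by subst k; rewrite (negbTE hst).
by case: (eqVneq k t) => [?|hkt]; first subst k.
Qed.

Lemma gate_cnotE s t : (s < n)%N -> (t < n)%N -> s != t ->
  gate_unitary R (gate_cnot s t) = mono R (PiC s t) (fun _ => 1).
Proof.
move=> hs ht hst; rewrite /gate_unitary /= /CNOT embed_mono //.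
by rewrite !inordK.
Qed.

Lemma gate_phE t u w : (t < n)%N -> (u < n)%N -> t != u ->
  gate_unitary R (gate_ph t u w) = mono R id (fun y => if qb t y then w else 1).
Proof.
move=> ht hu htu; rewrite /gate_unitary /= /PH embed_mono ?inordK //.
apply: mono_ext => y; last by rewrite hi4_loc2.
apply/eqP; rewrite eq_ord_bits; apply/forallP => k.
rewrite qb_Pi // /newbits hi4_loc2 lo4_loc2.
case: (eqVneq (k : nat) t) => [e|hkt]; first by rewrite e.
by case: (eqVneq (k : nat) u) => [e|hku]; first by rewrite e.
Qed.

Definition chi (t : nat) (ls : seq nat) : 'I_(qdim n) -> 'I_(qdim n) :=
  foldr (fun s f => PiC s t \o f) id ls.

Definition cn (t : nat) (ls : seq nat) : seq (gate R n) :=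
  map (fun s => gate_cnot s t) ls.

Definition okctl (t : nat) (ls : seq nat) :=
  forall s, s \in ls -> (s < n)%N /\ s != t.

Lemma sem_cn t ls : (t < n)%N -> okctl t ls ->
  sem (cn t ls) = mono R (chi t ls) (fun _ => 1).
Proof.
move=> ht; elim: ls => [|s ls IH] hok /=; first by rewrite mono1.
have [hs hst] := hok s (mem_head _ _).
rewrite IH; last by move=> s' hs'; apply: hok; rewrite inE hs' orbT.
by rewrite gate_cnotE // mono_mul; apply: mono_ext => // y; rewrite mulr1.
Qed.

Lemma qb_chi t ls y k : (t < n)%N -> okctl t ls -> (k < n)%N ->
  qb k (chi t ls y) =
  if k == t then qb t y (+) odd (\sum_(s <- ls) qb s y) else qb k y.
Proof.
move=> ht; elim: ls k => [|s ls IH] k hok hk /=.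
  by rewrite big_nil addbF; case: eqP => [->|].
have [hs hst] := hok s (mem_head _ _).
have hok' : okctl t ls by move=> s' hs'; apply: hok; rewrite inE hs' orbT.
rewrite qb_PiC // IH // (IH _ hok' hs) (negbTE hst) big_cons oddD.
case: (eqVneq k t) => [?|hkt]; last by rewrite IH // (negbTE hkt).
subst k; rewrite eqxx oddb.
by case: (qb t y); case: (qb s y); case: (odd _).
Qed.

Lemma chiK t ls y : (t < n)%N -> okctl t ls -> chi t ls (chi t ls y) = y.
Proof.
move=> ht hok; apply/eqP; rewrite eq_ord_bits; apply/forallP => k.
rewrite qb_chi //; case: (eqVneq (k : nat) t) => [e|hkt].
  2: by rewrite qb_chi // (negbTE hkt).
rewrite e qb_chi // eqxx.
have -> : (\sum_(s <- ls) qb s (chi t ls y) = \sum_(s <- ls) qb s y)%N.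
  apply: eq_big_seq => s hs; have [hsn hst] := hok s hs.
  by rewrite qb_chi // (negbTE hst).
by rewrite -addbA addbb addbF.
Qed.

Definition block (t u : nat) (ls : seq nat) (w : C) : seq (gate R n) :=
  cn t ls ++ [:: gate_ph t u w] ++ cn t ls.

Lemma sem_block t u ls w : (t < n)%N -> (u < n)%N -> t != u -> okctl t ls ->
  sem (block t u ls w) =
  mono R id (fun y => if qb t y (+) odd (\sum_(s <- ls) qb s y) then w else 1).
Proof.
move=> ht hu htu hok; rewrite /block !sem_cat sem_cn //.
rewrite /sem /= -/(sem _) mulmx1 gate_phE // !mono_mul.
apply: mono_ext => y /=; first by rewrite chiK.
by rewrite qb_chi // eqxx mulr1 mul1r.
Qed.

End Circ.
Section Circ2.
Variable R : realType.
Local Notation C := (R[i]).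

Lemma mono_unitary d (psi : 'I_d -> 'I_d) (phi : 'I_d -> C) :
  (forall y, psi (psi y) = y) -> (forall y, phi y * (phi y)^* = 1) ->
  unitary R (mono R psi phi).
Proof.
move=> hpsi hphi; rewrite /unitary; apply/matrixP => x y.
rewrite !mxE (bigD1 (psi x)) //= big1 => [|k hk].
  rewrite !mxE hpsi eqxx mul1r addr0 rmorphM /= rmorph_nat.
  rewrite [_ * (phi _)^*]mulrC mulrA hphi mul1r eq_sym.
  by case: (x == y).
rewrite !mxE.
have -> : (x == psi k) = false.
  apply/negbTE; apply: contra hk => /eqP ->; by rewrite hpsi.
by rewrite mul0r mul0r.
Qed.

Lemma unit_prod (I : Type) (s : seq I) (f : I -> C) :
  (forall a, f a * (f a)^* = 1) -> (\prod_(a <- s) f a) * (\prod_(a <- s) f a)^* = 1.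
Proof.
move=> h; rewrite rmorph_prod -big_split /=.
by rewrite big1 // => a _; apply: h.
Qed.

Variable n' : nat.
Local Notation n := n'.+1.

Lemma cnot_ok s t : (s < n)%N -> (t < n)%N -> s != t -> gate_ok R (gate_cnot R n' s t).
Proof.
move=> hs ht hst; split.
  by rewrite /= -(inj_eq val_inj) /= !inordK.
apply: mono_unitary; first exact: cnot4K.
by move=> _; rewrite rmorph1 mulr1.
Qed.

Lemma ph_ok t u w : (t < n)%N -> (u < n)%N -> t != u -> w * w^* = 1 ->
  gate_ok R (gate_ph R n' t u w).
Proof.
move=> ht hu htu hw; split.
  by rewrite /= -(inj_eq val_inj) /= !inordK.
apply: mono_unitary => // p; case: (hi4 p) => //.
by rewrite rmorph1 mulr1.
Qed.

Lemma block_ok t u ls w : (t < n)%N -> (u < n)%N -> t != u -> w * w^* = 1 ->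
  okctl n' t ls -> forall g, List.In g (block R n' t u ls w) -> gate_ok R g.
Proof.
move=> ht hu htu hw hok g.
have hcn : forall g, List.In g (cn R n' t ls) -> gate_ok R g.
  move=> g' /(List.in_map_iff _ _ _) [s [<- hs]].
  have /hok [hsn hst] : s \in ls.
    by elim: ls {hok} hs => //= a l IH [->|/IH]; rewrite inE ?eqxx // => ->; rewrite orbT.
  exact: cnot_ok.
rewrite /block => /(@List.in_app_or _ _ _ _) [/hcn //|/= [<-|/hcn //]].
exact: ph_ok.
Qed.

Variable m : nat.
Hypothesis hm : (0 < m)%N.
Hypothesis hmn : (m < n)%N.

Definition ctl (a : nat) : seq nat := [seq s <- iota 0 m | qb s a].

Lemma ctl_ok a : okctl n' m (ctl a).
Proof.
move=> s; rewrite mem_filter mem_iota add0n => /andP[_ /andP[_ hs]]; split.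
  exact: ltn_trans hs hmn.
by rewrite neq_ltn (leq_ltn_trans _ hs).
Qed.

Definition circ (w : nat -> C) (as_ : seq nat) : seq (gate R n) :=
  flatten [seq block R n' m 0 (ctl a) (w a) | a <- as_].

Definition circ_phase (w : nat -> C) (as_ : seq nat) (y : nat) : C :=
  \prod_(a <- as_) (if qb m y (+) odd (\sum_(s <- ctl a) qb s y) then w a else 1).

Lemma sem_circ w as_ :
  sem R n' (circ w as_) = mono R id (fun y => circ_phase w as_ y).
Proof.
rewrite /circ /circ_phase; elim: as_ => [|a l IH] /=.
  by rewrite mono1; apply: mono_ext => // y; rewrite big_nil.
rewrite sem_cat IH sem_block //; last exact: ctl_ok.
  by rewrite mono_mul; apply: mono_ext => // y; rewrite big_cons.
by rewrite neq_ltn hm.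
Qed.

Lemma circ_ok w as_ : (forall a, w a * (w a)^* = 1) ->
  forall g, List.In g (circ w as_) -> gate_ok R g.
Proof.
move=> hw; rewrite /circ; elim: as_ => [|a l IH] //= g /(@List.in_app_or _ _ _ _) [|/IH //].
apply: block_ok => //; [by rewrite neq_ltn hm | exact: ctl_ok].
Qed.

Lemma circ_size w as_ : (size (circ w as_) <= size as_ * (2 * m + 1))%N.
Proof.
rewrite /circ; elim: as_ => [|a l IH] //.
rewrite map_cons -cat1s flatten_cat /= cats0 size_cat.
set B := block _ _ _ _ _ _.
have hb : (size B <= 2 * m + 1)%N.
  rewrite /B /block !size_cat /= /cn size_map.
  have : (size (ctl a) <= m)%N by rewrite /ctl size_filter -{2}(size_iota 0 m) count_size.
  lia.
rewrite mulSn; move: IH hb; lia.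
Qed.

End Circ2.
Section Count.

Definition Pm (m a z : nat) : bool := odd (\sum_(s < m) qb s a * qb s z)%N.

Lemma PmS m a z : Pm m.+1 a z = (qb 0 a && qb 0 z) (+) Pm m (a %/ 2) (z %/ 2).
Proof.
rewrite /Pm big_ord_recl /= oddD oddM !oddb; congr (_ (+) odd _).
by apply: eq_bigr => i _; rewrite !qbS.
Qed.

Lemma Pm0 m a : Pm m a 0 = false.
Proof.
rewrite /Pm big1 // => i _; by rewrite /qb div0n /= muln0.
Qed.

Definition sg (b : bool) : int := if b then -1 else 1.
Definition bz (b : bool) : int := if b then 1 else 0.

Lemma sgD b c : sg (b (+) c) = sg b * sg c.
Proof. by case: b; case: c; rewrite /sg /= ?mulN1r ?mul1r ?opprK. Qed.

Lemma sum_half (F : nat -> int) N :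
  \sum_(0 <= a < N.*2) F a = \sum_(0 <= a < N) (F a.*2 + F a.*2.+1).
Proof.
elim: N => [|N IH]; first by rewrite !big_geq.
by rewrite doubleS !big_nat_recr //= IH addrA.
Qed.

Definition Tsum (m z z' : nat) : int :=
  \sum_(0 <= a < 2 ^ m) sg (Pm m a z) * sg (Pm m a z').

Lemma T_eq m z z' : (z < 2 ^ m)%N -> (z' < 2 ^ m)%N ->
  Tsum m z z' = (2 ^ m)%:R * (z == z')%:R.
Proof.
elim: m z z' => [|m IH] z z'.
  rewrite expn0 !ltnS !leqn0 => /eqP -> /eqP ->.
  by rewrite /Tsum big_nat1 !Pm0.
move=> hz hz'.
rewrite /Tsum expnS mul2n sum_half.
have hz2 : (z %/ 2 < 2 ^ m)%N by rewrite ltn_divLR // -expnSr.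
have hz2' : (z' %/ 2 < 2 ^ m)%N by rewrite ltn_divLR // -expnSr.
have e : forall a,
  sg (Pm m.+1 a.*2 z) * sg (Pm m.+1 a.*2 z') +
  sg (Pm m.+1 a.*2.+1 z) * sg (Pm m.+1 a.*2.+1 z') =
  (1 + sg (odd z (+) odd z')) * (sg (Pm m a (z %/ 2)) * sg (Pm m a (z' %/ 2))).
  move=> a; rewrite !PmS !qb0 odd_double /=.
  have -> : (a.*2.+1 %/ 2 = a)%N by lia.
  have -> : (a.*2 %/ 2 = a)%N by lia.
  rewrite odd_double /=.
  rewrite !sgD; case: (odd z); case: (odd z'); rewrite /sg /=; lia.
rewrite (eq_bigr _ (fun a _ => e a)) -mulr_sumr -/(Tsum m _ _) IH //.
have -> : (z == z') = (odd z == odd z') && (z %/ 2 == z' %/ 2)%N.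
  apply/eqP/andP => [->|[/eqP h1 /eqP h2]]; first by [].
  by rewrite (div.divn_eq z 2) (div.divn_eq z' 2) h2 !modn2 h1.
case: (odd z); case: (odd z'); case: (z %/ 2 == z' %/ 2)%N;
  rewrite /sg /= ?expnS; lia.
Qed.

Lemma sum_sg m z : (z < 2 ^ m)%N ->
  \sum_(0 <= a < 2 ^ m) sg (Pm m a z) = (2 ^ m)%:R * (z == 0%N)%:R.
Proof.
move=> hz; rewrite -T_eq ?expn_gt0 //; apply: eq_bigr => a _.
by rewrite Pm0 /= mulr1.
Qed.

Definition kk (m : nat) (B : nat -> bool) (a : nat) : int :=
  \sum_(0 <= z' < 2 ^ m) (if B z' then 2 * (2 * bz (Pm m a z') - 1) else 0).

Definition EE (m : nat) (B : nat -> bool) (z : nat) : int :=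
  \sum_(0 <= a < 2 ^ m) bz (Pm m a z) * kk m B a.

Lemma EE_eq m B z : B 0%N = false -> (z < 2 ^ m)%N ->
  EE m B z = (2 ^ m)%:R * bz (B z).
Proof.
move=> hB0 hz; rewrite /EE /kk.
under eq_bigr => a _ do rewrite mulr_sumr.
rewrite exchange_big /=.
transitivity (\sum_(0 <= z' < 2 ^ m)
   (if B z' then Tsum m z z' - \sum_(0 <= a < 2 ^ m) sg (Pm m a z') else 0)).
  apply: eq_big_nat => z' hz'; case: (B z'); last first.
    by rewrite big1 // => a _; rewrite mulr0.
  rewrite /Tsum -sumrB; apply: eq_bigr => a _.
  by case: (Pm m a z); case: (Pm m a z'); rewrite /sg /bz /=; lia.
transitivity (\sum_(0 <= z' < 2 ^ m)
   (if z' == z then (2 ^ m)%:R * bz (B z) else 0)).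
  apply: eq_big_nat => z' /andP[_ hz'].
  rewrite T_eq // sum_sg //.
  case: (eqVneq z' z) => [?|hne].
    subst z'; case hb: (B z); last by rewrite /bz mulr0.
    have -> : (z == 0%N) = false by apply/negbTE; apply: contraTneq hb => ->; rewrite hB0.
    by rewrite /bz mulr0 subr0.
  case hb: (B z') => //.
  have : z' != 0%N by apply: contraTneq hb => ->; rewrite hB0.
  by move/negbTE ->; rewrite /= mulr0 subrr.
rewrite (@big_cat_nat _ _ _ z) //= ?(ltnW hz) // (big_ltn hz) eqxx.
rewrite !big1_seq ?add0r ?addr0 // => i /andP[_]; rewrite mem_index_iota => /andP[h1 h2].
  all: by case: eqP => // e; move: h1 h2; rewrite e; lia.
Qed.

End Count.
Section Phase.
Variable R : realType.
Local Notation C := (R[i]).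

Lemma unit_exprz (x : C) : x * x^* = 1 -> forall k : int, x ^ k * (x ^ k)^* = 1.
Proof.
move=> h [k|k] /=.
  by rewrite rmorphXn -exprMn h expr1n.
by rewrite fmorphV /= -invfM rmorphXn -exprMn h expr1n invr1.
Qed.

Definition nu (m : nat) : C := (2 ^ m)%N.-root (-1).

Lemma nu_pow m : nu m ^+ (2 ^ m) = -1.
Proof. by rewrite /nu rootCK // expn_gt0. Qed.

Lemma nu_norm m : nu m * (nu m)^* = 1.
Proof.
have h : `|nu m| ^+ (2 ^ m) = 1 by rewrite -normrX nu_pow normrN normr1.
have : `|nu m| = 1.
  by apply/eqP; rewrite -(@pexpr_eq1 _ _ (2 ^ m)) ?expn_gt0 ?h.
by rewrite -normCK => ->; rewrite expr1n.
Qed.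

Lemma nu_unit m : nu m \is a GRing.unit.
Proof.
rewrite unitfE; apply/eqP => h; have := nu_norm m.
by rewrite h mul0r => /eqP; rewrite eq_sym oner_eq0.
Qed.

Lemma prod_phase (x : C) (s : seq nat) (P : nat -> bool) (k : nat -> int) :
  x \is a GRing.unit ->
  \prod_(a <- s) (if P a then x ^ k a else 1) = x ^ (\sum_(a <- s) bz (P a) * k a).
Proof.
move=> hx; elim: s => [|a s IH]; first by rewrite !big_nil expr0z.
rewrite !big_cons IH exprzDr //; case: (P a) => /=; by rewrite ?mul1r ?mul0r ?expr0z ?mul1r.
Qed.

Lemma Pm_ctl m a z : odd (\sum_(s <- ctl m a) qb s z) = Pm m a z.
Proof.
rewrite /ctl /Pm big_filter big_mkcond /=.
have -> : iota 0 m = index_iota 0 m by rewrite /index_iota subn0.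
rewrite big_mkord; congr odd.
by apply: eq_bigr => s _; case: (qb s a); rewrite ?mul1n ?mul0n.
Qed.

Definition wts (m : nat) (B : nat -> bool) (a : nat) : C := nu m ^ kk m B a.

Lemma phase_z m B z : B 0%N = false -> (z < 2 ^ m)%N ->
  circ_phase R m (wts m B) (iota 0 (2 ^ m)) z = if B z then -1 else 1.
Proof.
move=> hB hz; rewrite /circ_phase qb_small //.
under eq_bigr => a _ do rewrite /= Pm_ctl.
rewrite prod_phase ?nu_unit //.
have -> : \sum_(a <- iota 0 (2 ^ m)) bz (Pm m a z) * kk m B a = EE m B z.
  by rewrite /EE /index_iota subn0.
rewrite EE_eq //; case: (B z); rewrite /bz ?mulr0 ?expr0z // mulr1.
by rewrite natz -exprnP nu_pow.
Qed.

End Phase.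
Section Tests.
Variable R : realType.
Local Notation C := (R[i]).
Import mxtens.

Lemma adj_mul m k p (A : 'M[C]_(m, k)) (B : 'M[C]_(k, p)) :
  adj R (A *m B) = adj R B *m adj R A.
Proof. by rewrite /adj map_mxM trmx_mul. Qed.

Lemma adjK m k (A : 'M[C]_(m, k)) : adj R (adj R A) = A.
Proof. by apply/matrixP => i j; rewrite !mxE conjCK. Qed.

Lemma adjE m k (A : 'M[C]_(m, k)) i j : adj R A i j = (A j i)^*.
Proof. by rewrite !mxE. Qed.

Lemma adj_tens m k p q (A : 'M[C]_(m, k)) (B : 'M[C]_(p, q)) :
  adj R (A *t B) = adj R A *t adj R B.
Proof. by rewrite /adj (map_mxT Num.conj) trmx_tens. Qed.

Lemma psd_gram d k (X : 'M[C]_(d, k)) : psdmx R (X *m adj R X).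
Proof.
split; first by rewrite adj_mul adjK.
move=> v.
have -> : adj R v *m (X *m adj R X) *m v = adj R (adj R X *m v) *m (adj R X *m v).
  by rewrite adj_mul adjK !mulmxA.
rewrite !mxE sumr_ge0 // => i _; rewrite !mxE -normCKC exprn_ge0 //.
Qed.

Lemma psdZ d (r : C) (M : 'M[C]_d) : r^* = r -> 0 <= r -> psdmx R M -> psdmx R (r *: M).
Proof.
move=> hr r0 [hM hq]; split.
  apply/matrixP => i j; rewrite !mxE rmorphM /= hr.
  by rewrite -[in RHS]hM !mxE.
move=> v; rewrite -scalemxAr -scalemxAl mxE mulr_ge0 //.
Qed.

Lemma tensZ m k p q (a b : C) (A : 'M[C]_(m, k)) (B : 'M[C]_(p, q)) :
  (a *: A) *t (b *: B) = (a * b) *: (A *t B).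
Proof. by apply/matrixP => i j; rewrite !mxE mulrACA. Qed.

Lemma tensBr m k p q (A : 'M[C]_(m, k)) (B B' : 'M[C]_(p, q)) :
  A *t B - A *t B' = A *t (B - B').
Proof. by apply/matrixP => i j; rewrite !mxE mulrBr. Qed.

Lemma psd_tens d1 d2 k1 k2 (X : 'M[C]_(d1, k1)) (Y : 'M[C]_(d2, k2)) :
  psdmx R ((X *m adj R X) *t (Y *m adj R Y)).
Proof. by rewrite -tensmx_mul -adj_tens; apply: psd_gram. Qed.

Lemma tr_tens m k (A : 'M[C]_m) (B : 'M[C]_k) : \tr (A *t B) = \tr A * \tr B.
Proof.
rewrite /mxtrace mulr_suml.
under [RHS]eq_bigr do rewrite mulr_sumr.
rewrite pair_big /= (reindex (@mxtens_index m k)) /=.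
  by apply: eq_bigr => [[i j]] _; rewrite tensmxE.
exists (@mxtens_unindex m k) => x _; [exact: mxtens_indexK | exact: mxtens_unindexK].
Qed.

Lemma tr_delta d (A : 'M[C]_d) i j : \tr (A *m delta_mx i j) = A j i.
Proof.
rewrite /mxtrace (bigD1 j) //= big1 => [|k hk].
  rewrite addr0 !mxE (bigD1 i) //= big1 => [|l hl]; first by rewrite !mxE !eqxx mulr1 addr0.
  by rewrite !mxE (negbTE hl) mulr0.
rewrite !mxE big1 // => l _; rewrite !mxE eq_sym (negbTE hk) andbF mulr0 //.
Qed.

Lemma tr_sum k (I : finType) (F : I -> 'M[C]_k) :
  \tr (\sum_i F i) = \sum_i \tr (F i).
Proof. exact: raddf_sum. Qed.

Lemma test_value_tens d (A B U : 'M[C]_d) :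
  test_value R (A *t B) (uchannel R U) =
  \sum_i \sum_j A j i * (adj R U *m B *m U) j i.
Proof.
rewrite /test_value /choi mulmx_sumr tr_sum; apply: eq_bigr => i _.
rewrite mulmx_sumr tr_sum; apply: eq_bigr => j _.
rewrite tensmx_mul tr_tens tr_delta; congr (_ * _).
by rewrite /uchannel !mulmxA mxtrace_mulC !mulmxA tr_delta.
Qed.

End Tests.
Section PTest.
Variable R : realType.
Local Notation C := (R[i]).
Import mxtens.
Variable d : nat.
Variables z0 z : 'I_d.
Hypothesis hz : z0 != z.

Definition ee (x : 'I_d) : bool := (x == z0) || (x == z).
Definition wv : 'cV[C]_d := \col_x (ee x)%:R.
Definition PP : 'M[C]_d := \matrix_(x, y) ((ee x && ee y)%:R / 2).

Lemma half_conj : (1 / 2 : C)^* = 1 / 2.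
Proof. by rewrite rmorphM rmorph1 fmorphV /= rmorph_nat. Qed.

Lemma PP_E x y : PP x y = (ee x && ee y)%:R / 2.
Proof. by rewrite mxE. Qed.

Lemma PP_gram : PP = (1 / 2) *: (wv *m adj R wv).
Proof.
apply/matrixP => x y; rewrite !mxE big_ord1 !mxE rmorph_nat -natrM mulnb.
by rewrite mulrC mul1r.
Qed.

Lemma ee_nat x : ((ee x)%:R : C) = (x == z0)%:R + (x == z)%:R.
Proof.
rewrite /ee; case: (eqVneq x z0) => [->|h] /=.
  by case: eqP => [e|]; [move: hz; rewrite e eqxx | rewrite addr0].
by rewrite add0r.
Qed.

Lemma sum_delta (f : 'I_d -> C) c : \sum_x (x == c)%:R * f x = f c.
Proof.
rewrite (bigD1 c) //= eqxx mul1r big1 ?addr0 // => x /negbTE ->.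
by rewrite mul0r.
Qed.

Lemma sum_ee (f : 'I_d -> C) : \sum_x (ee x)%:R * f x = f z0 + f z.
Proof.
under eq_bigr do rewrite ee_nat mulrDl.
by rewrite big_split /= !sum_delta.
Qed.

Lemma PP_herm : adj R PP = PP.
Proof.
apply/matrixP => x y; rewrite adjE !PP_E rmorphM /= fmorphV /= !rmorph_nat.
by rewrite andbC.
Qed.

Lemma PP_idem : PP *m PP = PP.
Proof.
apply/matrixP => x y; rewrite PP_E mxE.
under eq_bigr do rewrite !PP_E.
case hx: (ee x); case hy: (ee y) => /=; last 3 first.
- by rewrite mul0r big1 // => k _; rewrite andbF mul0r mulr0.
- by rewrite mul0r big1 // => k _; rewrite mul0r.
- by rewrite mul0r big1 // => k _; rewrite mul0r.
have -> : \sum_k ((true && ee k)%:R / 2 * ((ee k && true)%:R / 2) : C) =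
          \sum_k (ee k)%:R * (1 / 4 : C).
  by apply: eq_bigr => k _; case: (ee k) => /=; field.
by rewrite sum_ee; field.
Qed.

Definition QQ : 'M[C]_d := 1%:M - PP.

Lemma QQ_gram : QQ *m adj R QQ = QQ.
Proof.
have hQ : adj R QQ = QQ.
  apply/matrixP => x y; rewrite adjE !mxE rmorphB /= rmorph_nat eq_sym.
  by rewrite rmorphM /= fmorphV /= !rmorph_nat andbC.
rewrite hQ /QQ mulmxBl mul1mx mulmxBr mulmx1 PP_idem.
by rewrite subrr subr0.
Qed.

Lemma PP_psd : psdmx R PP.
Proof. rewrite PP_gram; apply: psdZ; [exact: half_conj| |exact: psd_gram]. by rewrite mul1r invr_ge0 ler0n. Qed.

Lemma PP_density : density R PP.
Proof.
split; first exact: PP_psd.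
rewrite /mxtrace; under eq_bigr do rewrite PP_E andbb.
have -> : \sum_x ((ee x)%:R / 2 : C) = \sum_x (ee x)%:R * (1 / 2) .
  by apply: eq_bigr => x _; rewrite mul1r.
by rewrite sum_ee; field.
Qed.

Lemma test_PP : test_op R (PP *t PP).
Proof.
split.
  rewrite PP_gram tensZ; apply: psdZ; last exact: psd_tens.
    by rewrite rmorphM /= half_conj.
  by rewrite mulr_ge0 // mul1r invr_ge0 ler0n.
exists PP; split; first exact: PP_density.
rewrite tensBr -/QQ -QQ_gram PP_gram -[_ *m adj R QQ]scale1r tensZ.
apply: psdZ; last exact: psd_tens.
  by rewrite rmorphM /= half_conj rmorph1.
by rewrite mulr1 mul1r invr_ge0 ler0n.
Qed.

Lemma conj_mono (Phi : 'I_d -> C) (M : 'M[C]_d) j i :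
  (adj R (mono R id Phi) *m M *m mono R id Phi) j i = (Phi j)^* * M j i * Phi i.
Proof.
rewrite mxE (bigD1 i) //= big1 => [|k /negbTE hk]; last by rewrite !mxE hk mul0r mulr0.
rewrite addr0 !mxE eqxx mul1r (bigD1 j) //= big1 => [|l /negbTE hl].
  by rewrite addr0 !mxE eqxx mul1r.
by rewrite !mxE /= hl mul0r rmorph0 mul0r.
Qed.

Lemma value_PP (Phi : 'I_d -> C) :
  test_value R (PP *t PP) (uchannel R (mono R id Phi)) =
  (Phi z0 + Phi z) * (Phi z0 + Phi z)^* / 4.
Proof.
rewrite test_value_tens.
transitivity (\sum_i (ee i)%:R * (\sum_j (ee j)%:R * ((Phi j)^* * Phi i / 4))).
  apply: eq_bigr => i _; rewrite mulr_sumr; apply: eq_bigr => j _.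
  rewrite conj_mono !PP_E; case: (ee i); case: (ee j) => /=;
    rewrite ?mul0r ?mulr0 ?mul1r //; by field.
under eq_bigr do rewrite sum_ee.
rewrite sum_ee rmorphD /=; by field.
Qed.

End PTest.
Section Adv.
Variable R : realType.
Local Notation C := (R[i]).
Local Open Scope complex_scope.

Lemma normcR (x : R) : `|x%:C| = (`|x|)%:C.
Proof. by rewrite normc_def /= expr0n /= addr0 sqrtr_sqr. Qed.

Lemma mistake_choice (eps p : R) : (eps < 1 / 2)%R -> (0 <= p <= 1)%R ->
  ((eps%:C)%C < `|(p%:C)%C - ((p <= eps)%R)%:R|)%R.
Proof.
move=> he /andP[p0 p1].
have -> : (((p <= eps)%R)%:R : C) = ((((p <= eps)%R)%:R : R))%:C by rewrite rmorph_nat.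
rewrite -rmorphB /= normcR ltcR.
case: (lerP p eps) => h /=.
  rewrite ler0_norm ?subr_le0 //; lra.
by rewrite subr0 ger0_norm.
Qed.

Lemma adversary d (L : learner R d) (eps : R) (F : seq bool -> ('M[C]_d -> 'M[C]_d)) :
  (eps < 1 / 2)%R -> (forall h E, (0 <= L h E <= 1)%R) ->
  forall (Es : seq 'M[C]_(d * d)),
  (forall b, size b = size Es -> forall i, (i < size Es)%N ->
     test_value R (nth 0%R Es i) (F b) = ((nth false b i)%:R)%R) ->
  forall hist, exists b, size b = size Es /\ mistakes R L (F b) eps hist Es = size Es.
Proof.
move=> he hL Es; elim: Es F => [|E Es IH] F hF hist.
  by exists [::].
set b0 := (L hist E <= eps)%R.
have hF' : forall b, size b = size Es -> forall i, (i < size Es)%N ->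
    test_value R (nth 0%R Es i) (F (b0 :: b)) = ((nth false b i)%:R)%R.
  move=> b hb i hi; have := hF (b0 :: b); rewrite /= hb => /(_ erefl i.+1).
  by apply.
have [b [hb hm]] := IH (fun b => F (b0 :: b)) hF' (rcons hist (E, (b0%:R)%R)).
exists (b0 :: b); split; first by rewrite /= hb.
have hv : test_value R E (F (b0 :: b)) = (b0%:R)%R.
  by have := hF (b0 :: b); rewrite /= hb => /(_ erefl 0%N); apply.
rewrite /= hv hm mistake_choice //.
Qed.

End Adv.
Section Final.
Variable R : realType.
Local Notation C := (R[i]).
Import mxtens.

Lemma In_mem (T : eqType) (x : T) s : List.In x s -> x \in s.
Proof.
elim: s => //= a s IH [->|/IH h]; first by rewrite inE eqxx.
by rewrite inE h orbT.
Qed.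

Lemma family (n' G K : nat) (eps : R) (L : learner R (qdim n'.+1))
  (z0 : 'I_(qdim n'.+1)) (zf : nat -> 'I_(qdim n'.+1))
  (gsf : seq bool -> seq (gate R n'.+1))
  (Phif : seq bool -> 'I_(qdim n'.+1) -> C) :
  (eps < 1 / 2) -> (forall h E, 0 <= L h E <= 1) ->
  (forall i, (i < K)%N -> z0 != zf i) ->
  (forall b, size b = K ->
    [/\ (size (gsf b) <= G)%N, (forall g, List.In g (gsf b) -> gate_ok R g),
        sem R n' (gsf b) = mono R id (Phif b),
        (forall y, Phif b y * (Phif b y)^* = 1) &
        (Phif b z0 = 1 /\
        forall i, (i < K)%N -> Phif b (zf i) = if nth false b i then 1 else -1)]) ->
  exists U : 'M[C]_(qdim n'.+1), unitary_class R n'.+1 G U /\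
    exists Es : seq 'M[C]_(qdim n'.+1 * qdim n'.+1),
      (forall E, List.In E Es -> test_op R E) /\
      mistakes R L (uchannel R U) eps [::] Es = K.
Proof.
move=> heps hL hz hfam.
set Es := [seq (@PP R _ z0 (zf i) *t @PP R _ z0 (zf i)) | i <- iota 0 K].
have hsz : size Es = K by rewrite size_map size_iota.
have hF : forall b, size b = size Es -> forall i, (i < size Es)%N ->
    test_value R (nth 0 Es i) (uchannel R (sem R n' (gsf b))) = (nth false b i)%:R.
  move=> b; rewrite hsz => hb i hi.
  have [_ _ hsem _ [h0 hzi]] := hfam b hb.
  rewrite (nth_map 0%N) ?size_iota // nth_iota // add0n hsem value_PP ?hz //.
  rewrite h0 hzi //; case: (nth false b i) => /=.
    by rewrite rmorphD /= rmorph1; field.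
  by rewrite subrr mul0r mul0r.
have [b [hb hm]] := @adversary R _ L eps (fun b => uchannel R (sem R n' (gsf b))) heps hL Es hF [::].
rewrite hsz in hb hm.
have [hs hok hsem hun _] := hfam b hb.
exists (sem R n' (gsf b)); split.
  split; first by rewrite hsem; apply: mono_unitary.
  by exists (gsf b).
exists Es; split => //.
move=> E /(List.in_map_iff _ _ _) [i [<- /In_mem]]; rewrite mem_iota add0n => /andP[_ hi].
by apply: test_PP; apply: hz.
Qed.

End Final.
Section Inst.
Variable R : realType.
Local Notation C := (R[i]).

Lemma qdim_gt0 n : (0 < qdim n)%N. Proof. by rewrite /qdim expn_gt0. Qed.

Definition Bf (b : seq bool) (z' : nat) : bool := (0 < z')%N && ~~ nth false b z'.-1.

Lemma big_family n' m G (eps : R) (L : learner R (qdim n'.+1)) :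
  (0 < m)%N -> (m < n'.+1)%N -> (2 ^ m * (2 * m + 1) <= G)%N ->
  (eps < 1 / 2) -> (forall h E, 0 <= L h E <= 1) ->
  exists U : 'M[C]_(qdim n'.+1), unitary_class R n'.+1 G U /\
    exists Es : seq 'M[C]_(qdim n'.+1 * qdim n'.+1),
      (forall E, List.In E Es -> test_op R E) /\
      mistakes R L (uchannel R U) eps [::] Es = (2 ^ m - 1)%N.
Proof.
move=> hm hmn hG heps hL.
have hmn2 : (2 ^ m <= qdim n'.+1)%N by rewrite /qdim leq_exp2l // ltnW.
set z0 : 'I_(qdim n'.+1) := Ordinal (qdim_gt0 n'.+1).
pose zf (i : nat) : 'I_(qdim n'.+1) := insubd z0 i.+1.
have vzf : forall i, (i < 2 ^ m - 1)%N -> (zf i : nat) = i.+1.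
  move=> i hi; rewrite val_insubd; case: ifP => // /negbT; rewrite -leqNgt.
  move: hi hmn2; lia.
apply: (@family R n' G (2 ^ m - 1) eps L z0 zf
  (fun b => circ R n' m (wts R m (Bf b)) (iota 0 (2 ^ m)))
  (fun b y => circ_phase R m (wts R m (Bf b)) (iota 0 (2 ^ m)) y)) => //.
  by move=> i hi; rewrite -(inj_eq val_inj) /= vzf.
move=> b hb; split.
- have := circ_size R n' m hm hmn (wts R m (Bf b)) (iota 0 (2 ^ m)).
  by rewrite size_iota => h; exact: leq_trans h hG.
- apply: circ_ok => // a; apply: unit_exprz; exact: nu_norm.
- exact: sem_circ.
- move=> y; apply: unit_prod => a; case: ifP => _; last by rewrite rmorph1 mulr1.
  by apply: unit_exprz; exact: nu_norm.
split.
  by rewrite (phase_z R m (Bf b) 0%N) // expn_gt0.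
move=> i hi; rewrite vzf // phase_z //; last by move: hi; lia.
by rewrite /Bf /=; case: (nth false b i).
Qed.

Lemma small_family n' G (eps : R) (L : learner R (qdim n'.+2)) :
  (0 < G)%N ->
  (eps < 1 / 2) -> (forall h E, 0 <= L h E <= 1) ->
  exists U : 'M[C]_(qdim n'.+2), unitary_class R n'.+2 G U /\
    exists Es : seq 'M[C]_(qdim n'.+2 * qdim n'.+2),
      (forall E, List.In E Es -> test_op R E) /\
      mistakes R L (uchannel R U) eps [::] Es = 1%N.
Proof.
move=> hG heps hL.
have h1 : (1 < qdim n'.+2)%N by rewrite /qdim (ltn_exp2l 0) .
set z0 : 'I_(qdim n'.+2) := Ordinal (qdim_gt0 n'.+2).
set z1 : 'I_(qdim n'.+2) := Ordinal h1.
pose wb (b : seq bool) : C := if nth false b 0 then 1 else -1.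
have hw : forall b, wb b * (wb b)^* = 1.
  by move=> b; rewrite /wb; case: ifP => _; rewrite ?rmorph1 ?rmorphN ?rmorph1 ?mulr1 ?mulrNN ?mulr1.
apply: (@family R n'.+1 G 1 eps L z0 (fun _ => z1)
  (fun b => [:: gate_ph R n'.+1 0 1 (wb b)])
  (fun b y => if qb 0 y then wb b else 1)) => //.
move=> b hb; split => //.
- by move=> g [<-|//]; apply: ph_ok.
- by rewrite /sem /= mulmx1 gate_phE.
- by move=> y; case: ifP => _ //; rewrite rmorph1 mulr1.
split; first by [].
by case=> // _.
Qed.

End Inst.

Theorem corollary4p5 (R : realType) (eps : R) :
  eps < 1 / 2 ->
  exists c : R, 0 < c /\
    forall (n G : nat), (2 <= n)%N ->
    forall L : learner R (qdim n),
      (forall hist E, 0 <= L hist E <= 1) ->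
      exists U : 'M[R[i]]_(qdim n),
        unitary_class R n G U /\
        exists Es : seq 'M[R[i]]_(qdim n * qdim n),
          (forall E, List.In E Es -> test_op R E) /\
          c * Num.min (2 ^+ n) (Num.sqrt (G%:R)) <=
            (mistakes R L (uchannel R U) eps [::] Es)%:R.
Proof.
move=> heps; exists (1 / 5); split; first by lra.
case=> [|[|n']] G // _ L hL.
have hmin : forall (k : nat) (x : R), x <= 5 * k%:R -> 1 / 5 * x <= k%:R.
  by move=> k x hx; lra.
set mn := Num.min _ _.
case: G @mn hL => [|G] mn hL.
  exists 1%:M; split.
    split; first by rewrite /unitary /adj map_mx1 trmx1 mulmx1.
    by exists [::].
  exists [::]; split => //=.
  have : mn <= 0 by rewrite /mn sqrtr0 ge_min lexx orbT.
  rewrite /=; lra.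
have [hsmall|hbig] := ltnP G.+1 6.
  have [U [hU [Es [hE hm]]]] := @small_family R n' G.+1 eps L isT heps hL.
  exists U; split => //; exists Es; split => //.
  rewrite hm; apply: hmin.
  rewrite /mn ge_min; apply/orP; right.
  have h25 : (G.+1%:R : R) <= 5%:R ^+ 2.
    by rewrite -natrX ler_nat; move: hsmall; lia.
  rewrite -(ler_sqrt (G.+1%:R)) ?exprn_ge0 ?ler0n // sqrtr_sqr ger0_norm ?ler0n // in h25.
  by rewrite mulr1.
pose P := fun m => [&& (0 < m)%N, (m < n'.+2)%N & (2 ^ m * (2 * m + 1) <= G.+1)%N].
have exP : exists m, P m by exists 1%N; rewrite /P /=; move: hbig; lia.
have ubP : forall i, P i -> (i <= n'.+2)%N by move=> i /and3P[_ /ltnW].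
case: (ex_maxnP exP ubP) => m /and3P[hm0 hmn hmG] hmax.
have [U [hU [Es [hE hm]]]] := @big_family R n'.+1 m G.+1 eps L hm0 hmn hmG heps hL.
exists U; split => //; exists Es; split => //.
rewrite hm; apply: hmin.
have hxm : (m < 2 ^ m)%N by apply: ltn_expl.
case: (ltnP m.+1 n'.+2) => hlt.
  have hnot : ~~ P m.+1.
    by apply/negP => /hmax; rewrite ltnn.
  have hG2 : (2 ^ m.+1 * (2 * m.+1 + 1) > G.+1)%N.
    by move: hnot; rewrite /P hlt /= -ltnNge.
  rewrite /mn ge_min; apply/orP; right.
  have hq : (G.+1 <= (5 * (2 ^ m - 1)) ^ 2)%N.
    move: hG2 hxm hm0; rewrite expnS; set x := (2 ^ m)%N => hG2 hxm hm0.
    have h1 : (2 * x * (2 * m.+1 + 1) <= 2 * x * (2 * x + 1))%N.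
      by rewrite leq_mul2l; apply/orP; right; move: hxm; lia.
    have hx2 : (2 <= x)%N by move: hxm hm0; lia.
    have {h1 hG2} hG3 : (G.+1 < 2 * x * (2 * x + 1))%N by exact: leq_trans hG2 h1.
    move: hx2 hG3; clear hxm; clearbody x; case: x => [|[|y]] // _.
    have -> : (y.+2 - 1 = y.+1)%N by lia.
    rewrite expnS expn1 => h; clear -h.
    have e1 : (2 * y.+2 * (2 * y.+2 + 1) = 4 * (y * y) + 18 * y + 20)%N by ring.
    have e2 : (5 * y.+1 * (5 * y.+1) = 25 * (y * y) + 50 * y + 25)%N by ring.
    rewrite e1 in h; rewrite e2; lia.
  have h25 : (G.+1%:R : R) <= (5 * (2 ^ m - 1))%:R ^+ 2 by rewrite -natrX ler_nat.
  rewrite -(ler_sqrt (G.+1%:R)) ?exprn_ge0 ?ler0n // sqrtr_sqr ger0_norm ?ler0n // in h25.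
  by rewrite natrM in h25.
have em : m = n'.+1 by move: hlt hmn; lia.
rewrite /mn ge_min; apply/orP; left.
rewrite -natrX -natrM ler_nat em.
have h2 : (2 <= 2 ^ n'.+1)%N by rewrite (leq_exp2l 1).
rewrite [X in (X <= _)%N]expnS; move: h2; set x := (2 ^ n'.+1)%N; lia.
Qed.
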